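(* Let $q\ge2$ and let $U$ be a $q\times q$ row-stochastic matrix with strictly positive entries. There is a constant $C_4$ independent of $n$ such that for all sufficiently large $n$ the following holds. Let $k\ge1$, let $\mathbf{t}_1,\mathbf{t}_1',\dots,\mathbf{t}_k,\mathbf{t}_k'\in\mathcal{N}_{q,n}$, let $p_1,\dots,p_k\ge0$, and let $Q_1,Q_2$ be distributions on $\mathcal{N}_{q,n}$ with $$Q_2(\mathbf{t})=Q_1(\mathbf{t})+\sum_{i=1}^kp_i\big(\mathbb{1}\{\mathbf{t}=\mathbf{t}_i'\}-\mathbb{1}\{\mathbf{t}=\mathbf{t}_i\}\big)\quad\forall\mathbf{t}\in\mathcal{N}_{q,n}.$$ If $Q_{\mathrm{op},1},Q_{\mathrm{op},2}$ are the output distributions of $q$-NCC$_{n,U}$ for inputs $Q_1,Q_2$, then $$d_{\mathrm{TV}}(Q_{\mathrm{op},1},Q_{\mathrm{op},2})\le\frac{C_4(\log n)^{(q-2)/2}}{\sqrt n}\sum_{i=1}^kp_i\,d_{\mathrm c}(\mathbf{t}_i,\mathbf{t}_i').$$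
   Context: $\mathcal{N}_{q,n}=\{\mathbf{t}\in\mathbb{Z}_{\ge0}^q:\sum_it_i=n\}$ is the set of compositions of vectors in $[1:q]^n$ (composition of $\mathbf{x}$: $(N(1|\mathbf{x}),\dots,N(q|\mathbf{x}))$, $N(c|\mathbf{x})=|\{i:x_i=c\}|$). The $q$-ary noisy composition channel $q$-NCC$_{n,U}$ has input/output alphabet $\mathcal{N}_{q,n}$ and $P_{q\text{-NC}}(\mathbf{w}|\mathbf{t})=\sum_{\mathbf{z}\text{ of composition }\mathbf{w}}\prod_iU(z_i|x_i)$ for any $\mathbf{x}$ of composition $\mathbf{t}$; the output distribution for input distribution $Q$ is $\sum_{\mathbf{t}}Q(\mathbf{t})P_{q\text{-NC}}(\cdot|\mathbf{t})$. $d_{\mathrm c}(\mathbf{t},\mathbf{t}')=\frac12\sum_i|t_i-t_i'|$. $d_{\mathrm{TV}}(P,Q)=\frac12\sum|P-Q|$. Logarithms base 2. *)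

(* Defs.v *)
From HB Require Import structures.
From mathcomp Require Import all_boot all_order all_algebra.
From mathcomp Require Import all_classical all_reals all_analysis.
Set Implicit Arguments. Unset Strict Implicit. Unset Printing Implicit Defensive.
Import Order.TTheory GRing.Theory Num.Theory.
Local Open Scope ring_scope.

(* The alphabet [1:q] is 'I_q; vectors in [1:q]^n are {ffun 'I_n -> 'I_q}. *)

Definition Ncount (q n : nat) (c : 'I_q) (x : {ffun 'I_n -> 'I_q}) : nat :=
  #|[set i | x i == c]|.

(* N_{q,n}: compositions t in Z_{>=0}^q with sum n (entries are <= n). *)
Definition Ncomp (q n : nat) : predArgType :=
  {t : {ffun 'I_q -> 'I_n.+1} | (\sum_(i < q) (t i : nat))%N == n}.

Definition compv (q n : nat) (t : Ncomp q n) (c : 'I_q) : nat := (sval t) c.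

Definition has_comp (q n : nat) (x : {ffun 'I_n -> 'I_q}) (t : Ncomp q n) : bool :=
  [forall c, Ncount c x == compv t c].

(* some (any) x of composition t (always exists; value irrelevant by symmetry) *)
Definition rep_of (q n : nat) (t : Ncomp q n) : option {ffun 'I_n -> 'I_q} :=
  [pick x | has_comp x t].

(* P_{q-NC}(w|t) = sum_{z of composition w} prod_i U(z_i|x_i), U(b|a) = U a b *)
Definition PNC (R : realType) (q n : nat) (U : 'M[R]_q) (w t : Ncomp q n) : R :=
  match rep_of t with
  | Some x => \sum_(z : {ffun 'I_n -> 'I_q} | has_comp z w) \prod_(i < n) U (x i) (z i)
  | None => 0
  end.

Definition out_dist (R : realType) (q n : nat) (U : 'M[R]_q)
    (Q : Ncomp q n -> R) (w : Ncomp q n) : R :=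
  \sum_(t : Ncomp q n) Q t * PNC U w t.

Definition is_dist (R : realType) (q n : nat) (Q : Ncomp q n -> R) : Prop :=
  (forall t, 0 <= Q t) /\ \sum_(t : Ncomp q n) Q t = 1.

Definition dTV (R : realType) (T : finType) (P Q : T -> R) : R :=
  2^-1 * \sum_(x : T) `|P x - Q x|.

Definition dc {R : realType} (q n : nat) (t t' : Ncomp q n) : R :=
  2^-1 * \sum_(c < q) `|(compv t c)%:R - (compv t' c)%:R : R|.

Definition row_stochastic_pos (R : realType) (q : nat) (U : 'M[R]_q) : Prop :=
  (forall a b, 0 < U a b) /\ (forall a, \sum_(b < q) U a b = 1).

Definition log2 (R : realType) (x : R) : R := ln x / ln 2.

(* Main.v *)
Require Import Defs.
From HB Require Import structures.
From mathcomp Require Import all_boot all_order all_algebra.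
From mathcomp Require Import all_classical all_reals all_analysis.
From mathcomp Require Import fingroup perm ring lra zify.
Import Order.TTheory GRing.Theory Num.Theory.
Set Implicit Arguments. Unset Strict Implicit. Unset Printing Implicit Defensive.

Lemma NcountE q n (c : 'I_q) (x : {ffun 'I_n -> 'I_q}) :
  Ncount c x = count (pred1 c) (map x (enum 'I_n)).
Proof.
rewrite /Ncount count_map cardE /enum_mem size_filter filter_predT.
by apply: eq_count => i; rewrite /= inE.
Qed.

Lemma Ncount_sum q n (x : {ffun 'I_n -> 'I_q}) : (\sum_(c < q) Ncount c x)%N = n.
Proof.
rewrite /Ncount.
transitivity (\sum_(c < q) \sum_(i < n) (x i == c : nat))%N.
  apply: eq_bigr => c _; rewrite -sum1dep_card big_mkcond /=; apply: eq_bigr => i _.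
  by case: (x i == c).
rewrite (exchange_big _ _ _ _ _ (fun c i => nat_of_bool (x i == c))).
rewrite /= -[n in RHS]card_ord -sum1_card; apply: eq_bigr => i _.
by rewrite (bigD1 (x i)) //= eqxx big1 ?addn0 // => c /negbTE; rewrite eq_sym => ->.
Qed.

Lemma has_comp_uniq q n (z : {ffun 'I_n -> 'I_q}) (w w' : Ncomp q n) :
  has_comp z w -> has_comp z w' -> w = w'.
Proof.
move=> /forallP H /forallP H'; apply: val_inj; apply/ffunP => c; apply: val_inj.
have E : compv w c = compv w' c by rewrite -(eqP (H c)) -(eqP (H' c)).
exact: E.
Qed.

Lemma exists_perm q n (x x' : {ffun 'I_n -> 'I_q}) :
  (forall c, Ncount c x = Ncount c x') -> exists p : 'S_n, forall i, x i = x' (p i).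
Proof.
move=> H.
have PE : perm_eq (map x (enum 'I_n)) [tuple x' i | i < n].
  apply/allP => y _ /=.
  by rewrite -!NcountE H.
case/tuple_permP: PE => p Ep; exists p => i.
have := congr1 (fun s => nth (x i) s i) Ep.
rewrite (nth_map i) ?size_enum_ord // nth_ord_enum.
by rewrite -tnth_nth !tnth_mktuple.
Qed.

Local Open Scope ring_scope.

Definition wt (R : comRingType) q n (U : 'M[R]_q) (x z : {ffun 'I_n -> 'I_q}) : R :=
  \prod_i U (x i) (z i).
Definition Px (R : comRingType) q n (U : 'M[R]_q) (x : {ffun 'I_n -> 'I_q}) (w : Ncomp q n) : R :=
  \sum_(z | has_comp z w) wt U x z.

Lemma Ncount_perm q n (p : 'S_n) (z : {ffun 'I_n -> 'I_q}) c :
  Ncount c [ffun i => z (p i)] = Ncount c z.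
Proof.
rewrite /Ncount -(card_preimset [set j | z j == c] (@perm_inj _ p)).
by apply: eq_card => i; rewrite !inE ffunE.
Qed.

Lemma has_comp_perm q n (p : 'S_n) (z : {ffun 'I_n -> 'I_q}) w :
  has_comp [ffun i => z (p i)] w = has_comp z w.
Proof. by apply: eq_forallb => c; rewrite Ncount_perm. Qed.

Lemma Px_perm (R : comRingType) q n (U : 'M[R]_q) (x x' : {ffun 'I_n -> 'I_q}) w :
  (forall c, Ncount c x = Ncount c x') -> Px U x w = Px U x' w.
Proof.
move=> /exists_perm [p Hp].
pose h (z : {ffun 'I_n -> 'I_q}) := [ffun i => z (p i)].
have hinj : injective h.
  move=> z1 z2 /ffunP E; apply/ffunP => j.
  have := E (p^-1 j)%g; rewrite !ffunE permKV. by [].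
rewrite /Px (reindex_inj hinj); apply: eq_big => z; first by rewrite has_comp_perm.
move=> _; rewrite /wt [RHS](reindex_inj (@perm_inj _ p)); apply: eq_bigr => i _.
by rewrite Hp ffunE.
Qed.

Lemma exists_comp q n (c0 : 'I_q) (t : Ncomp q n) : exists x, has_comp x t.
Proof.
pose s := flatten [seq nseq (compv t c) c | c <- enum 'I_q].
have cnt : forall c, count_mem c s = compv t c.
  move=> c; rewrite count_flatten -map_comp.
  rewrite sumnE big_map big_enum /= (bigD1 c) //= count_nseq /= eqxx mul1n.
  rewrite big1 ?addn0 // => c' Hc; rewrite count_nseq /=.
  by rewrite (negbTE Hc).
have sz : size s = n.
  rewrite size_flatten /shape -map_comp sumnE big_map big_enum /=.
  rewrite -[RHS](eqP (svalP t)); apply: eq_bigr => c _.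
  by rewrite /= size_nseq.
pose x := [ffun i : 'I_n => nth c0 s i].
exists x; apply/forallP => c; rewrite NcountE.
have -> : map x (enum 'I_n) = s.
  rewrite -[RHS](take_size s) -(map_nth_iota0 c0) sz // -val_enum_ord -map_comp.
  by apply: eq_map => i; rewrite /= ffunE.
by rewrite cnt.
Qed.

Lemma sum_wtH (R : comRingType) q n (U : 'M[R]_q) (x : {ffun 'I_n -> 'I_q})
  (H : 'I_n -> 'I_q -> R) :
  \sum_z wt U x z * \prod_i H i (z i) = \prod_i \sum_c U (x i) c * H i c.
Proof.
rewrite bigA_distr_bigA /=; apply: eq_bigr => z _.
by rewrite /wt -big_split.
Qed.

Lemma sum_wt (R : comRingType) q n (U : 'M[R]_q) (x : {ffun 'I_n -> 'I_q}) :
  (forall a, \sum_b U a b = 1) -> \sum_z wt U x z = 1.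
Proof.
move=> st; transitivity (\sum_z wt U x z * \prod_(i < n) (1:R)).
  by apply: eq_bigr => z _; rewrite big1_eq mulr1.
move: (sum_wtH U x (fun _ _ => 1)) => /= ->; apply: big1 => i _; under eq_bigr do rewrite mulr1; exact: st.
Qed.

Lemma sum_wt1 (R : comRingType) q n (U : 'M[R]_q) (x : {ffun 'I_n -> 'I_q}) i
  (F : 'I_q -> R) :
  (forall a, \sum_b U a b = 1) ->
  \sum_z wt U x z * F (z i) = \sum_c U (x i) c * F c.
Proof.
move=> st; transitivity (\sum_z wt U x z * \prod_k (if k == i then F (z k) else 1)).
  apply: eq_bigr => z _; congr (_ * _).
  by rewrite (bigD1 i) //= eqxx big1 ?mulr1 // => k /negbTE -> //.
move: (sum_wtH U x (fun k c => if k == i then F c else 1)) => /= ->.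
rewrite (bigD1 i) //= eqxx [X in _ * X]big1 ?mulr1 // => k /negbTE ->.
under eq_bigr do rewrite mulr1; exact: st.
Qed.

Lemma sum_wt2 (R : comRingType) q n (U : 'M[R]_q) (x : {ffun 'I_n -> 'I_q}) i j
  (F G : 'I_q -> R) : i != j ->
  (forall a, \sum_b U a b = 1) ->
  \sum_z wt U x z * (F (z i) * G (z j)) =
    (\sum_c U (x i) c * F c) * (\sum_c U (x j) c * G c).
Proof.
move=> ij st.
transitivity (\sum_z wt U x z * \prod_k (if k == i then F (z k) else if k == j then G (z k) else 1)).
  apply: eq_bigr => z _; congr (_ * _); apply/esym.
  rewrite (bigD1 i) //= eqxx (bigD1 j) /= 1?eq_sym //.
  rewrite (negbTE ij) eqxx big1 ?mulr1 // => k /andP [/negbTE -> /negbTE ->] //.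
move: (sum_wtH U x (fun k c => if k == i then F c else if k == j then G c else 1)) => /= ->.
rewrite (bigD1 i) //= eqxx (bigD1 j) /= 1?eq_sym //.
rewrite (negbTE ij) eqxx [X in _ * (_ * X)]big1 ?mulr1 // => k /andP [/negbTE -> /negbTE ->].
under eq_bigr do rewrite mulr1; exact: st.
Qed.

Lemma sum_ind (R : comRingType) q (U : 'M[R]_q) a c :
  \sum_e U a e * ((e == c)%:R : R) = U a c.
Proof.
rewrite (bigD1 c) //= eqxx mulr1 big1 ?addr0 // => e /negbTE ->.
by rewrite mulr0.
Qed.

Lemma var_bound (R : realFieldType) q n (U : 'M[R]_q) (x : {ffun 'I_n -> 'I_q})
  (B : {set 'I_n}) (a c : 'I_q) :
  (forall a, \sum_b U a b = 1) -> (forall i, i \in B -> x i = a) ->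
  \sum_z wt U x z * (\sum_(j in B) ((z j == c)%:R : R) - #|B|%:R * U a c) ^+ 2
   = #|B|%:R * (U a c - U a c ^+ 2).
Proof.
move=> st xB; set p := U a c.
pose f (e : 'I_q) : R := (e == c)%:R - p.
have Ef0 : \sum_e U a e * f e = 0.
  rewrite /f; under eq_bigr do rewrite mulrBr.
  by rewrite sumrB sum_ind -mulr_suml st mul1r subrr.
have Ef2 : \sum_e U a e * (f e * f e) = p - p ^+ 2.
  have E : forall e, f e * f e = (e == c)%:R * (1 - 2 * p) + p ^+ 2.
    by move=> e; rewrite /f; case: (e == c) => /=; ring.
  under eq_bigr do rewrite E mulrDr mulrA.
  rewrite big_split /= -mulr_suml sum_ind -mulr_suml st /p; ring.
transitivity (\sum_z wt U x z * \sum_(j in B) \sum_(k in B) (f (z j) * f (z k))).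
  apply: eq_bigr => z _; congr (_ * _).
  have -> : \sum_(j in B) ((z j == c)%:R : R) - #|B|%:R * p = \sum_(j in B) f (z j).
    by rewrite /f sumrB sumr_const mulr_natl.
  by rewrite expr2 mulr_suml; apply: eq_bigr => j _; rewrite mulr_sumr.
under eq_bigr do rewrite mulr_sumr.
rewrite exchange_big /=.
transitivity (\sum_(j in B) (p - p ^+ 2)); last by rewrite sumr_const mulr_natl.
apply: eq_bigr => j jB; under eq_bigr do rewrite mulr_sumr.
rewrite exchange_big /= (bigD1 j) //= [X in _ + X]big1 ?addr0.
  by move: (@sum_wt1 _ _ _ U x j (fun e => f e * f e) st) => /= ->; rewrite xB.
move=> k /andP [kB kj].
by rewrite sum_wt2 1?eq_sym // !xB // Ef0 mul0r.
Qed.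

Lemma abs_moment (R : realFieldType) (T : finType) (w X : T -> R) (eps : R) :
  (forall t, 0 <= w t) -> \sum_t w t = 1 -> 0 < eps ->
  \sum_t w t * X t ^+ 2 <= eps ^+ 2 -> \sum_t w t * `|X t| <= eps.
Proof.
move=> w0 w1 e0 hX.
have H : (\sum_t w t * `|X t|) * (2 * eps) <= eps ^+ 2 + eps ^+ 2.
  apply: le_trans (_ : \sum_t w t * (eps ^+ 2 + X t ^+ 2) <= _).
    rewrite mulr_suml; apply: ler_sum => t _; rewrite -mulrA ler_wpM2l //.
    have : 0 <= (`|X t| - eps) ^+ 2 by rewrite sqr_ge0.
    rewrite -(real_normK (num_real (X t))).
    move: (`|X t|) => u; nra.
  under eq_bigr do rewrite mulrDr.
  by rewrite big_split /= -mulr_suml w1 mul1r lerD2l.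
have e2 : 0 < 2 * eps by rewrite mulr_gt0.
rewrite -(ler_pM2r e2); apply: le_trans H _; rewrite le_eqVlt; apply/orP; left; apply/eqP; ring.
Qed.

Definition Phi (R : comRingType) q n (U : 'M[R]_q) (x : {ffun 'I_n -> 'I_q}) j0 c (w : Ncomp q n) : R :=
  \sum_(z | has_comp z w && (z j0 == c)) \prod_(i | i != j0) U (x i) (z i).

Lemma S_split (R : comRingType) q n (U : 'M[R]_q) (x x' : {ffun 'I_n -> 'I_q}) j0 c w :
  (forall i, i != j0 -> x' i = x i) ->
  \sum_(z | has_comp z w && (z j0 == c)) wt U x' z = U (x' j0) c * Phi U x j0 c w.
Proof.
move=> Hx; rewrite /Phi mulr_sumr; apply: eq_bigr => z /andP [_ /eqP zc].
rewrite /wt (bigD1 j0) //= zc; congr (_ * _); apply: eq_bigr => i ij; by rewrite Hx.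
Qed.

Lemma Px_split (R : comRingType) q n (U : 'M[R]_q) (x x' : {ffun 'I_n -> 'I_q}) j0 w :
  (forall i, i != j0 -> x' i = x i) ->
  Px U x' w = \sum_c U (x' j0) c * Phi U x j0 c w.
Proof.
move=> Hx; rewrite /Px (partition_big (fun z : {ffun 'I_n -> 'I_q} => z j0) predT) //=.
by apply: eq_bigr => c _; rewrite (S_split U c w Hx).
Qed.

Lemma S_sym (R : comRingType) q n (U : 'M[R]_q) (x : {ffun 'I_n -> 'I_q}) j j0 c w :
  x j = x j0 ->
  \sum_(z | has_comp z w && (z j == c)) wt U x z =
  \sum_(z | has_comp z w && (z j0 == c)) wt U x z.
Proof.
move=> xj; pose p := tperm j j0.
pose h (z : {ffun 'I_n -> 'I_q}) := [ffun i => z (p i)].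
have hinj : injective h.
  move=> z1 z2 /ffunP E; apply/ffunP => k.
  have := E (p^-1 k)%g; rewrite !ffunE permKV. by [].
rewrite (reindex_inj hinj); apply: eq_big => z.
  by rewrite has_comp_perm ffunE /p tpermL.
move=> _; rewrite /wt [RHS](reindex_inj (@perm_inj _ p)); apply: eq_bigr => i _.
rewrite ffunE; congr (U _ _).
by rewrite /p; case: tpermP => // ->.
Qed.

Lemma S_avg (R : comRingType) q n (U : 'M[R]_q) (x : {ffun 'I_n -> 'I_q}) j0 c w :
  #|[set i | x i == x j0]|%:R * \sum_(z | has_comp z w && (z j0 == c)) wt U x z =
  \sum_(z | has_comp z w) wt U x z * \sum_(j in [set i | x i == x j0]) ((z j == c)%:R : R).
Proof.
transitivity (\sum_(j in [set i | x i == x j0]) \sum_(z | has_comp z w && (z j == c)) wt U x z).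
  rewrite [RHS](eq_bigr (fun _ => \sum_(z | has_comp z w && (z j0 == c)) wt U x z)).
    by rewrite sumr_const mulr_natl.
  by move=> j; rewrite inE => /eqP xj; rewrite (S_sym _ _ _ xj).
under eq_bigr do rewrite big_mkcondr /=.
rewrite exchange_big /=; apply: eq_bigr => z _; rewrite mulr_sumr.
by apply: eq_bigr => j _; case: (z j == c); rewrite ?mulr1 ?mulr0.
Qed.

Lemma sum_w_le (R : realFieldType) q n (G : {ffun 'I_n -> 'I_q} -> R) :
  (forall z, 0 <= G z) ->
  \sum_(w : Ncomp q n) \sum_(z | has_comp z w) G z <= \sum_z G z.
Proof.
move=> G0; under eq_bigr do rewrite big_mkcond /=.
rewrite exchange_big /=; apply: ler_sum => z _.
case: (pickP (has_comp z)) => [w0 hw0|none].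
  rewrite (bigD1 w0) //= hw0 big1 ?addr0 // => w wne.
  case hw: (has_comp z w) => //.
  by move: wne; rewrite (has_comp_uniq hw hw0) eqxx.
by rewrite big1 // => w _; rewrite none.
Qed.

Lemma step (R : realFieldType) q n (U : 'M[R]_q) (dl eps : R)
  (x : {ffun 'I_n -> 'I_q}) (j0 : 'I_n) (b : 'I_q) :
  (forall a b, dl <= U a b) -> 0 < dl -> (forall a, \sum_b U a b = 1) -> 0 < eps ->
  q%:R / (n%:R * dl) <= eps ^+ 2 ->
  \sum_(w : Ncomp q n) `|Px U x w - Px U [ffun i => if i == j0 then b else x i] w|
    <= 4 * eps.
Proof.
move=> Udl dl0 st e0 hE.
have U0 : forall a b, 0 <= U a b by move=> a' b'; apply: le_trans (Udl a' b'); exact: ltW.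
pose a := x j0.
have [ast _ Hmax] := @arg_maxnP _ a predT (fun c => Ncount c x) isT.
pose x'' := [ffun i => if i == j0 then ast else x i].
have x''j0 : x'' j0 = ast by rewrite ffunE eqxx.
pose B := [set i | x'' i == x'' j0].
pose L := #|B|.
have nqL : (n <= q * L)%N.
  apply: leq_trans (_ : (q * Ncount ast x <= _)%N); last first.
    rewrite leq_mul2l; apply/orP; right; apply: subset_leq_card.
    apply/fintype.subsetP => i; rewrite !inE x''j0 ffunE => /eqP xi.
    by case: (i == j0) => //; rewrite xi.
  rewrite -{1}(Ncount_sum x) -[q in (_ <= q * _)%N]card_ord -sum_nat_const.
  by apply: leq_sum => c _; apply: Hmax.
have n0 : (0 < n)%N := leq_ltn_trans (leq0n _) (ltn_ord j0).
have L0 : (0 < L)%N.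
  by case: (L) nqL => //; rewrite muln0 leqn0 => /eqP n0'; move: n0; rewrite n0'.
pose Y c (z : {ffun 'I_n -> 'I_q}) : R :=
  (\sum_(j in B) ((z j == c)%:R : R)) / (L%:R * U ast c).
have Lr0 : 0 < (L%:R : R) by rewrite ltr0n.
have PhiE : forall c w, Phi U x j0 c w = \sum_(z | has_comp z w) wt U x'' z * Y c z.
  move=> c w.
  have h1 := S_avg U x'' j0 c w.
  have hx'' : forall i, i != j0 -> x'' i = x i by move=> i /negbTE ij; rewrite ffunE ij.
  rewrite (S_split U c w hx'') x''j0 in h1.
  have pc : 0 < U ast c by apply: lt_le_trans (Udl _ _).
  rewrite /Y; under eq_bigr do rewrite mulrA.
  rewrite -mulr_suml /L /B x''j0 -h1; field.
  by rewrite (lt0r_neq0 pc) /= -x''j0; exact: lt0r_neq0 Lr0.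
have wt0 : forall z, 0 <= wt U x'' z by move=> z; apply: prodr_ge0 => i _.
have devb : forall c, \sum_z wt U x'' z * `|Y c z - 1| <= eps.
  move=> c; apply: abs_moment => //; first exact: sum_wt.
  have pc : 0 < U ast c by apply: lt_le_trans (Udl _ _).
  have hv := @var_bound R q n U x'' B ast c st.
  have hB : forall i, i \in B -> x'' i = ast by move=> i; rewrite inE x''j0 => /eqP.
  have {}hv := hv hB.
  have E : forall z, (Y c z - 1) ^+ 2 =
     (\sum_(j in B) ((z j == c)%:R : R) - #|B|%:R * U ast c) ^+ 2 / (L%:R * U ast c) ^+ 2.
    move=> z; rewrite /Y /L; field.
    by apply/andP; split; apply: lt0r_neq0.
  under eq_bigr do rewrite E mulrA.
  rewrite -mulr_suml hv.
  have Lp : 0 < L%:R * U ast c by rewrite mulr_gt0.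
  apply: le_trans hE.
  rewrite /L; set l := (#|B|%:R : R); set p := U ast c.
  have hn : (n%:R : R) <= q%:R * l by rewrite -natrM ler_nat.
  have pdl : dl <= p := Udl _ _.
  have n0r : 0 < (n%:R : R) by rewrite ltr0n.
  rewrite ler_pdivlMr ?mulr_gt0 //.
  have lp0 : 0 < l * p by rewrite mulr_gt0.
  apply: le_trans (_ : l * p / (l * p) ^+ 2 * (n%:R * dl) <= _).
    apply: ler_wpM2r; first by apply: mulr_ge0; apply: ltW.
    apply: ler_wpM2r; first by rewrite invr_ge0 sqr_ge0.
    have := sqr_ge0 p; have := ltW Lr0; rewrite /l; move: (#|B|%:R : R) => l' ? ?; nra.
  have -> : l * p / (l * p) ^+ 2 = (l * p)^-1.
    by rewrite expr2 invfM mulrA mulfV ?mul1r // lt0r_neq0.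
  rewrite ler_pdivrMl //.
  apply: le_trans (_ : q%:R * l * p <= _); last by rewrite le_eqVlt; apply/orP; left; apply/eqP; ring.
  apply: ler_pM => //; first exact: ltW; exact: ltW.
have PhiD : forall c, \sum_w `|Phi U x j0 c w - Phi U x j0 a w| <= eps + eps.
  move=> c.
  apply: le_trans (_ : \sum_w \sum_(z | has_comp z w) wt U x'' z * `|Y c z - Y a z| <= _).
    apply: ler_sum => w _; rewrite !PhiE -sumrB.
    apply: le_trans (ler_norm_sum _ _ _) _.
    by apply: ler_sum => z _; rewrite -mulrBr normrM ger0_norm.
  apply: le_trans (sum_w_le _) _.
    by move=> z; apply: mulr_ge0.
  apply: le_trans (_ : \sum_z (wt U x'' z * `|Y c z - 1| + wt U x'' z * `|Y a z - 1|) <= _).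
    apply: ler_sum => z _; rewrite -mulrDr ler_wpM2l //.
    have -> : Y c z - Y a z = (Y c z - 1) - (Y a z - 1) by ring.
    exact: ler_normB.
  by rewrite big_split /=; apply: lerD (devb c) (devb a).
set y := [ffun i => if i == j0 then b else x i].
have Pd : forall w, Px U x w - Px U y w =
    \sum_c (U a c - U b c) * (Phi U x j0 c w - Phi U x j0 a w).
  move=> w.
  have hy : forall i, i != j0 -> y i = x i by move=> i /negbTE ij; rewrite ffunE ij.
  rewrite (@Px_split _ _ _ U x x j0 w (fun _ _ => erefl)) (@Px_split _ _ _ U x y j0 w hy).
  have -> : y j0 = b by rewrite ffunE eqxx.
  under [RHS]eq_bigr do rewrite mulrBr.
  rewrite [RHS]sumrB -[X in _ = _ - X]mulr_suml sumrB !st subrr mul0r subr0 -sumrB.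
  by apply: eq_bigr => c _; rewrite mulrBl.
apply: le_trans (_ : \sum_w \sum_c `|U a c - U b c| * `|Phi U x j0 c w - Phi U x j0 a w| <= _).
  apply: ler_sum => w _; rewrite Pd; apply: le_trans (ler_norm_sum _ _ _) _.
  by apply: ler_sum => c _; rewrite normrM.
rewrite exchange_big /=.
apply: le_trans (_ : \sum_c (U a c + U b c) * (eps + eps) <= _).
  apply: ler_sum => c _; rewrite -mulr_sumr; apply: ler_pM => //.
  - exact: sumr_ge0.
  - by apply: le_trans (ler_normB _ _) _; rewrite !ger0_norm.
rewrite -mulr_suml big_split /= !st.
by rewrite le_eqVlt; apply/orP; left; apply/eqP; ring.
Qed.

Definition Dn q n (x x' : {ffun 'I_n -> 'I_q}) : nat :=
  (\sum_(c < q) (Ncount c x - Ncount c x'))%N.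

Lemma Ncount_upd q n (x : {ffun 'I_n -> 'I_q}) j0 b c :
  (Ncount c [ffun i => if i == j0 then b else x i] + (x j0 == c)
   = Ncount c x + (b == c))%N.
Proof.
rewrite /Ncount (cardD1 j0) [in RHS](cardD1 j0) !inE ffunE eqxx.
have -> : #|[predD1 [set i | [ffun i => if i == j0 then b else x i] i == c] & j0]|
        = #|[predD1 [set i | x i == c] & j0]|.
  apply: eq_card => i; rewrite !inE ffunE.
  by case: (i == j0).
by move: (nat_of_bool _) (nat_of_bool _) (#|_|) => u v t; lia.
Qed.

Lemma le_sum_eq (q : nat) (e f : 'I_q -> nat) :
  (forall c, e c <= f c)%N -> (\sum_c e c = \sum_c f c)%N -> forall c, e c = f c.
Proof.
move=> le Es c.
have : (\sum_c (f c - e c) == 0)%N by rewrite sumnB // Es subnn.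
rewrite sum_nat_eq0 => /forallP /(_ c) /=; rewrite subn_eq0 => H.
by apply/eqP; rewrite eqn_leq le H.
Qed.

Lemma path_bound (R : realFieldType) q n (U : 'M[R]_q) (K : R)
  (x' : {ffun 'I_n -> 'I_q}) :
  (forall (x : {ffun 'I_n -> 'I_q}) j0 b,
     \sum_(w : Ncomp q n) `|Px U x w - Px U [ffun i => if i == j0 then b else x i] w| <= K) ->
  forall m (x : {ffun 'I_n -> 'I_q}), (Dn x x' <= m)%N ->
  \sum_(w : Ncomp q n) `|Px U x w - Px U x' w| <= K * (Dn x x')%:R.
Proof.
move=> hstep m; elim: m => [|m IH] x hD.
  have D0 : Dn x x' = 0%N by apply/eqP; rewrite -leqn0.
  have le : forall c, (Ncount c x <= Ncount c x')%N.
    move=> c; move/eqP: D0; rewrite /Dn sum_nat_eq0 => /forallP /(_ c) /=.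
    by rewrite subn_eq0.
  have Eq := le_sum_eq le (etrans (Ncount_sum x) (esym (Ncount_sum x'))).
  rewrite D0 mulr0 big1 // => w _; rewrite (Px_perm U w Eq) subrr normr0 //.
case: (posnP (Dn x x')) => [D0|Dpos].
  by apply: IH; rewrite D0.
have [a Ha] : exists a, (Ncount a x' < Ncount a x)%N.
  move: Dpos; rewrite lt0n /Dn sum_nat_eq0 => /forallPn [a /=].
  by rewrite subn_eq0 -ltnNge => ?; exists a.
have [b Hb] : exists b, (Ncount b x < Ncount b x')%N.
  case: (pickP (fun c => Ncount c x < Ncount c x')%N) => [b hb | none]; first by exists b.
  have le : forall c, (Ncount c x' <= Ncount c x)%N by move=> c; rewrite leqNgt none.
  have Eq := le_sum_eq le (etrans (Ncount_sum x') (esym (Ncount_sum x))).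
  by move: Ha; rewrite Eq ltnn.
have ab : a != b by apply/eqP => E; move: Ha Hb; rewrite E => h1 h2; have := ltn_trans h1 h2; rewrite ltnn.
have [j0 xj0] : exists j0, x j0 = a.
  have : (0 < Ncount a x)%N by apply: leq_ltn_trans Ha.
  rewrite /Ncount card_gt0 => /set0Pn [j0]; rewrite inE => /eqP ?; by exists j0.
set y := [ffun i => if i == j0 then b else x i].
have Dy : (Dn y x' + 1 = Dn x x')%N.
  have one : (\sum_(c < q) nat_of_bool (a == c) = 1)%N.
    by rewrite (bigD1 a) //= eqxx big1 // => c; rewrite eq_sym => /negbTE ->.
  rewrite /Dn -one -big_split /=.
  apply: eq_bigr => c _.
  have := Ncount_upd x j0 b c; rewrite xj0 -/y.
  case: (eqVneq a c) => [<-|ac].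
    by rewrite eq_sym (negbTE ab) /=; lia.
  case: (eqVneq b c) => [<-|bc] /=.
    by move: Hb; lia.
  by lia.
apply: le_trans (_ : \sum_w (`|Px U x w - Px U y w| + `|Px U y w - Px U x' w|) <= _).
  apply: ler_sum => w _.
  have -> : Px U x w - Px U x' w = (Px U x w - Px U y w) + (Px U y w - Px U x' w) by ring.
  exact: ler_normD.
rewrite big_split /= -Dy natrD mulrDr mulr1 [in leRHS]addrC.
apply: lerD; first exact: hstep.
by apply: IH; rewrite -ltnS -addn1 Dy.
Qed.

Lemma sum_eqind (R : comRingType) (T : finType) (a : T) (F : T -> R) :
  \sum_s ((a == s)%:R : R) * F s = F a.
Proof.
rewrite (bigD1 a) //= eqxx mul1r big1 ?addr0 // => s; rewrite eq_sym => /negbTE ->.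
by rewrite mul0r.
Qed.

Lemma Dn_dc (R : realFieldType) q n (x x' : {ffun 'I_n -> 'I_q}) :
  (Dn x x')%:R * 2 = \sum_c `|(Ncount c x)%:R - (Ncount c x')%:R : R|.
Proof.
have E1 : forall c, `|(Ncount c x)%:R - (Ncount c x')%:R : R| =
   (Ncount c x - Ncount c x')%N%:R + (Ncount c x' - Ncount c x)%N%:R.
  move=> c; case: (leqP (Ncount c x) (Ncount c x')) => h.
    rewrite (eqnP h) add0r natrB // ler0_norm ?opprB // subr_le0 ler_nat //.
  rewrite (eqnP (ltnW h)) addr0 natrB ?(ltnW h) // ger0_norm // subr_ge0 ler_nat ltnW //.
have E2 : \sum_c ((Ncount c x - Ncount c x')%N%:R - (Ncount c x' - Ncount c x)%N%:R : R) = 0.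
  have E3 : forall c, ((Ncount c x - Ncount c x')%N%:R - (Ncount c x' - Ncount c x)%N%:R : R)
      = (Ncount c x)%:R - (Ncount c x')%:R.
    move=> c; case: (leqP (Ncount c x) (Ncount c x')) => h.
      by rewrite (eqnP h) sub0r natrB // opprB.
    by rewrite (eqnP (ltnW h)) subr0 natrB // ltnW.
  under eq_bigr do rewrite E3.
  by rewrite sumrB -!natr_sum !Ncount_sum subrr.
under eq_bigr do rewrite E1.
rewrite big_split /=; move: E2; rewrite sumrB => /eqP; rewrite subr_eq0 => /eqP <-.
by rewrite /Dn natr_sum mulr2n mulrDr mulr1.
Qed.

Unset Implicit Arguments.

Theorem lemma5 (R : realType) (q : nat) (U : 'M[R]_q) :
  (2 <= q)%N -> row_stochastic_pos U ->
  exists C4 : R, exists N : nat, forall n : nat, (N <= n)%N ->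
    forall (k : nat) (t t' : 'I_k -> Ncomp q n) (p : 'I_k -> R)
           (Q1 Q2 : Ncomp q n -> R),
      (1 <= k)%N ->
      (forall i, 0 <= p i) ->
      is_dist Q1 -> is_dist Q2 ->
      (forall s : Ncomp q n,
         Q2 s = Q1 s + \sum_(i < k) p i * ((t' i == s)%:R - (t i == s)%:R)) ->
      dTV (out_dist U Q1) (out_dist U Q2)
        <= C4 * (log2 (n%:R : R)) `^ (((q%:R : R) - 2) / 2) / Num.sqrt (n%:R)
           * \sum_(i < k) p i * dc (t i) (t' i).
Proof.
move=> q2 [Upos st].
have q0 : (0 < q)%N by apply: leq_trans q2.
pose c0 : 'I_q := Ordinal q0.
have [pm _ Hpm] := @arg_minP _ R _ (c0, c0) predT (fun pr : 'I_q * 'I_q => U pr.1 pr.2) isT.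
set dl := U pm.1 pm.2.
have dl0 : 0 < dl by apply: Upos.
have dlle : forall a b, dl <= U a b by move=> a b; exact: (Hpm (a, b)).
pose kap : R := 1 + q%:R / dl.
have kap1 : 1 <= kap by rewrite lerDl divr_ge0 // ltW.
exists (2 * kap), 2%N.
move=> n n2 k t t' p Q1 Q2 k1 p0 dQ1 dQ2 HQ.
have n0r : 0 < (n%:R : R) by rewrite ltr0n; apply: leq_trans n2.
set sn := Num.sqrt (n%:R : R).
have sn0 : 0 < sn by rewrite sqrtr_gt0.
have sn2 : sn ^+ 2 = n%:R by rewrite sqr_sqrtr // ltW.
pose eps := kap / sn.
have eps0 : 0 < eps by rewrite divr_gt0 // (lt_le_trans ltr01 kap1).
have hE : q%:R / (n%:R * dl) <= eps ^+ 2.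
  rewrite /eps expr_div_n sn2.
  have -> : q%:R / (n%:R * dl) = (q%:R / dl) / n%:R by field; rewrite !lt0r_neq0.
  rewrite ler_pM2r ?invr_gt0 //.
  apply: le_trans (_ : kap <= _); first by rewrite /kap lerDr.
  by rewrite expr2 ler_peMl // (le_trans ler01 kap1).
have stepb := fun x j0 b => @step R q n U dl eps x j0 b dlle dl0 st eps0 hE.
have rep : forall s : Ncomp q n, exists x, rep_of s = Some x /\ has_comp x s.
  move=> s; rewrite /rep_of; case: pickP => [x hx|none]; first by exists x.
  by have [x hx] := exists_comp c0 s; move: (none x); rewrite hx.
have pairb : forall s s' : Ncomp q n, \sum_w `|PNC U w s - PNC U w s'| <= 4 * eps * dc s s'.
  move=> s s'; have [x [rx hx]] := rep s; have [x' [rx' hx']] := rep s'.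
  have -> : dc (R:=R) s s' = (Dn x x')%:R.
    rewrite /dc.
    have -> : \sum_c `|(compv s c)%:R - (compv s' c)%:R : R| = (Dn x x')%:R * 2.
      rewrite Dn_dc; apply: eq_bigr => c _.
      by move/forallP: hx => /(_ c) /eqP ->; move/forallP: hx' => /(_ c) /eqP ->.
    by field.
  rewrite /PNC rx rx'.
  exact: (@path_bound R q n U (4 * eps) x' stepb _ x (leqnn _)).
have HO : forall w, out_dist U Q1 w - out_dist U Q2 w =
    \sum_i p i * (PNC U w (t i) - PNC U w (t' i)).
  move=> w; rewrite /out_dist.
  under [X in _ - X]eq_bigr do rewrite HQ mulrDl.
  rewrite big_split /= opprD addrA subrr add0r.
  under eq_bigr do rewrite mulr_suml.
  rewrite exchange_big /= -sumrN; apply: eq_bigr => i _.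
  under eq_bigr do rewrite -mulrA mulrBl.
  rewrite -mulr_sumr sumrB !sum_eqind; ring.
rewrite /dTV.
apply: le_trans (_ : 2^-1 * (\sum_i p i * (4 * eps * dc (t i) (t' i))) <= _).
  rewrite ler_pM2l ?invr_gt0 //.
  apply: le_trans (_ : \sum_w \sum_i p i * `|PNC U w (t i) - PNC U w (t' i)| <= _).
    apply: ler_sum => w _; rewrite HO; apply: le_trans (ler_norm_sum _ _ _) _.
    by apply: ler_sum => i _; rewrite normrM ger0_norm.
  rewrite exchange_big /=; apply: ler_sum => i _; rewrite -mulr_sumr.
  by apply: ler_wpM2l => //; exact: pairb.
have dc0 : forall i, 0 <= dc (R:=R) (t i) (t' i).
  by move=> i; rewrite /dc mulr_ge0 ?invr_ge0 // sumr_ge0.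
have S0 : 0 <= \sum_i p i * dc (t i) (t' i) by apply: sumr_ge0 => i _; apply: mulr_ge0.
have -> : 2^-1 * (\sum_i p i * (4 * eps * dc (t i) (t' i))) =
    (2 * kap / sn) * \sum_i p i * dc (t i) (t' i).
  rewrite mulr_sumr mulr_sumr; apply: eq_bigr => i _; rewrite /eps; field.
  by rewrite lt0r_neq0.
apply: ler_wpM2r => //.
have L1 : 1 <= log2 (n%:R : R).
  rewrite /log2 ler_pdivlMr ?ln_gt0 ?ltr1n // mul1r.
  rewrite ler_ln ?posrE //; first by rewrite ler_nat.
have P1 : 1 <= log2 (n%:R : R) `^ (((q%:R : R) - 2) / 2).
  apply: le_trans (_ : log2 (n%:R : R) `^ 0 <= _); first by rewrite powRr0.
  apply: ler_powR => //; rewrite divr_ge0 // subr_ge0 ler_nat //.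
rewrite -!mulrA ler_pM2l ?mulr_gt0 ?(lt_le_trans ltr01 kap1) //.
rewrite mulrA; apply: ler_wpM2r; first by rewrite invr_ge0 ltW.
by rewrite ler_peMr // (le_trans ler01 kap1).
Qed.
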